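(* Let $R$ be an associative ring with identity and involution $*$, and let $a\in R^{\#}\cap R^{\dagger}$. Then $a\in R^{SEP}$ if and only if $a(a^{\#})^*a^{\dagger}$ is a left $a^{\dagger}a^2$-idempotent, i.e. $(a(a^{\#})^*a^{\dagger})^2=a^{\dagger}a^2\,a(a^{\#})^*a^{\dagger}$.
   Context: An involution on $R$ is a map $x\mapsto x^*$ with $(x^* )^*=x$, $(x+y)^*=x^*+y^*$, $(xy)^*=y^*x^*$. An element $a$ is Moore–Penrose invertible if there is $b$ with $aba=a$, $bab=b$, $(ab)^*=ab$, $(ba)^*=ba$; such $b$ is unique, denoted $a^{\dagger}$, and $R^{\dagger}$ is the set of such $a$. An element $a$ is group invertible if there is $b$ with $aba=a$, $bab=b$, $ab=ba$; such $b$ is unique, denoted $a^{\#}$, and $R^{\#}$ is the set of such $a$. For $a\in R^{\#}\cap R^{\dagger}$, $a$ is SEP if $a^*=a^{\dagger}=a^{\#}$; $R^{SEP}$ denotes the set of SEP elements. For $e,c\in R$, $e$ is a left $c$-idempotent if $e^2=ce$, and a right $c$-idempotent if $e^2=ec$. *)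

(* Defs.v *)
From mathcomp Require Import all_boot all_algebra.
Set Implicit Arguments. Unset Strict Implicit. Unset Printing Implicit Defensive.
Import GRing.Theory.
Local Open Scope ring_scope.

Definition is_involution (R : pzRingType) (inv : R -> R) : Prop :=
  [/\ forall x, inv (inv x) = x,
      forall x y, inv (x + y) = inv x + inv y
    & forall x y, inv (x * y) = inv y * inv x].

Definition is_MP_inverse (R : pzRingType) (inv : R -> R) (a b : R) : Prop :=
  [/\ a * b * a = a, b * a * b = b, inv (a * b) = a * b & inv (b * a) = b * a].

Definition is_group_inverse (R : pzRingType) (a b : R) : Prop :=
  [/\ a * b * a = a, b * a * b = b & a * b = b * a].

Definition MP_invertible (R : pzRingType) (inv : R -> R) (a : R) : Prop :=
  exists b, is_MP_inverse inv a b.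

Definition group_invertible (R : pzRingType) (a : R) : Prop :=
  exists b, is_group_inverse a b.

Definition is_SEP (R : pzRingType) (inv : R -> R) (a : R) : Prop :=
  exists d g, [/\ is_MP_inverse inv a d, is_group_inverse a g,
                  inv a = d & d = g].

Definition left_c_idempotent (R : pzRingType) (c e : R) : Prop :=
  e * e = c * e.

(* Main.v *)
Require Import Defs.
From mathcomp Require Import all_boot all_algebra.
From Stdlib Require Import Setoid.
Local Open Scope ring_scope.
Import GRing.Theory.

Ltac nf := rewrite -?mulrA.
Ltac rw H :=
  let T := type of H in
  lazymatch T with @eq ?A ?u ?v =>
   let H1 := fresh "E" in let H2 := fresh "E" in
   assert (H1 : u = v) by exact H;
   assert (H2 : forall t : A, u * t = v * t) by (move=> t; by rewrite H);
   rewrite -?mulrA in H1;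
   repeat setoid_rewrite <- mulrA in H2;
   nf; first [rewrite H2 | rewrite H1]; clear H1 H2; nf
  end.

Lemma ginv_uniq (R : pzRingType) (a x y : R) :
  is_group_inverse a x -> is_group_inverse a y -> x = y.
Proof.
case=> axa xax ax; case=> aya yay ay.
have xxa : x * x * a = x by rw (esym ax); rw xax.
have ayy : a * y * y = y by rw ay; rw yay.
have h1 : x = x * a * y.
  transitivity (x * x * (a * y * a)); first by rw aya; rw xxa.
  by rw (esym ay); rw xxa.
have h2 : y = x * a * y.
  transitivity ((a * x * a) * y * y); first by rw axa; rw ayy.
  by rw ax; rw ayy.
by rewrite h1 -h2.
Qed.

Theorem theorem3p2 (R : pzRingType) (inv : R -> R) (a g d : R) :
  is_involution inv ->
  is_group_inverse a g ->
  is_MP_inverse inv a d ->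
  is_SEP inv a <->
  left_c_idempotent (d * (a ^+ 2)) (a * inv g * d).
Proof.
case=> ii iD iM => Hg; have Hg' := Hg; case: Hg' => aga gag ag.
case=> ada dad iad ida.
have aag : a * a * g = a by rw ag; rw aga.
have gaa : g * a * a = a by rw (esym ag); rw aga.
have agg : a * g * g = g by rw ag; rw gag.
have gga : g * g * a = g by rw (esym ag); rw gag.
rewrite /left_c_idempotent expr2; split.
- case=> d' [g'] [Hd' Hg2 ia dg].
  have gg : g' = g by apply: ginv_uniq Hg2 Hg.
  rewrite dg gg in ia; clear dg Hd'.
  have ig : inv g = a by rewrite -ia ii.
  have iga : inv (g * a) = g * a by rewrite iM ig ia -ag.
  have iag : inv (a * g) = a * g by rewrite iM ig ia ag.
  have da : d * a = g * a.
    transitivity ((d * a) * (g * a)); first by rw aga.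
    by rewrite -{1}ida -iga -iM; rw ada.
  have ad : a * d = a * g.
    transitivity ((a * g) * (a * d)); first by rw aga.
    by rewrite -{1}iag -iad -iM; rw ada.
  have dg : d = g by transitivity (d * a * d); [by rw dad | rw da; rw ad; rw gag].
  subst d; rewrite ig; rw aag; rw gaa; done.
- move=> E.
  have adg : a * d * g = g.
    transitivity (a * d * (a * g * g)); first by rw agg.
    by rw ada; rw agg.
  have gda : g * d * a = g.
    transitivity (g * g * a * d * a); first by rw gga.
    by rw ada; rw gga.
  have F1 : inv g = d * a * inv g.
    by rewrite -{1}gda -mulrA iM ida.
  have F3 : inv a = d * a * inv a.
    by rewrite -{1}ada -mulrA iM ida.
  have F4 : a = a * inv a * inv d.
    by rewrite -{1}ada -mulrA -ida iM mulrA.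
  have F5 : inv a = inv g * inv a * inv a.
    by rewrite -{1}aag iM iM mulrA.
  have F6 : inv g = inv g * inv g * inv a.
    by rewrite -{1}agg iM iM mulrA.
  have S0 : a * inv g * d * (a * inv g * d) = a * inv g * inv g * d.
    by rw (esym F1).
  have S6 : a * inv g = d * a * a * a * inv g * inv a.
    transitivity (a * inv g * d * (a * inv g * d) * a * inv a).
      by rewrite S0; rw (esym F3); rw (esym F6).
    by rewrite E; rw (esym F3).
  have S7 : a * inv g = d * a * a * inv g.
    have S7a : a * a * inv g = a * a * a * inv g * inv a.
      by rewrite -[a * a * inv g]mulrA {1}S6; rw ada.
    by rewrite {1}S6; rw (esym S7a).
  have S8 : a = d * a * a.
    transitivity (a * inv g * inv a * inv a * inv d).
      by rewrite {1}F4 {1}F5; nf.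
    rw S7. transitivity (d * a * (a * (inv g * inv a * inv a) * inv d)).
      by nf.
    by rewrite -F5 -F4 mulrA.
  have S9 : g * a = d * a.
    by rewrite -ag {1}S8; rw aag.
  have S10 : a * inv g = a * a * inv g * inv a.
    by rewrite {1}S6; rw (esym S8).
  have S11 : g * a * inv g = a * inv g * inv a.
    by rewrite -[g * a * inv g]mulrA {1}S10; rw gaa.
  have iga : inv (g * a) = g * a by rewrite S9 ida.
  have S12 : inv g = g * a * inv g.
    by rewrite -{1}gag -mulrA iM ag iga.
  have S13 : inv g = a.
    rewrite S12 S11 -mulrA -iM ag iga; rw aga; done.
  have ia : inv a = g by rewrite -S13 ii.
  exists g, g; split => //.
  split => //; by rewrite iM ia S13 ?ag.
Qed.
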